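(* Let $Q$ be a quiver, $C\subseteq\Bbbk Q$ a subcoalgebra, and $I$ a finitely generated right coideal of $C$. There exists a right coideal $I'\subseteq C$ containing $I$ and generated by a finite independent set of multipaths in $C$.
   Context: $\Bbbk$ is a field. The path coalgebra $\Bbbk Q$ has basis all paths of $Q$ (including trivial paths, identified with vertices), with $\Delta(p)=\sum_{xy=p}x\otimes y$ ($xy$ = concatenation) and $\varepsilon(p)=1$ if $p$ is trivial, $0$ otherwise. A right coideal of $C$ is a subspace $I$ with $\Delta(I)\subseteq I\otimes C$; for $x\in C$, $\langle x\rangle^C$ is the smallest right coideal of $C$ containing $x$, and a right coideal is generated by a set if it is the smallest right coideal containing it. A multipath is a nonzero linear combination of paths all sharing the same source and the same target; $M(C)$ is the set of multipaths in $C$. A subset $F\subseteq M(C)$ is independent if it is linearly independent and $\langle x\rangle^C\cap F=\{x\}$ for each $x\in F$. *)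

(* Defs.v *)
From HB Require Import structures.
From mathcomp Require Import all_boot all_algebra.
Set Implicit Arguments. Unset Strict Implicit. Unset Printing Implicit Defensive.
Import GRing.Theory.
Local Open Scope ring_scope.

(* A raw path is a pair (start vertex, list of arrows in walking order);
   it is a path of Q when the arrows chain up from the start vertex.
   The trivial path at v is (v, [::]).  Elements of k Q are finitely
   supported functions on paths (coordinates in the path basis);
   elements of k Q (x) k Q are functions on pairs of paths. *)

Section PathCoalgebra.
Variables (K : fieldType) (V A : eqType) (s t : A -> V).

Definition rawpath := (V * seq A)%type.

Fixpoint chain (v : V) (l : seq A) : bool :=
  if l is a :: l' then (s a == v) && chain (t a) l' else true.

Fixpoint pend (v : V) (l : seq A) : V :=
  if l is a :: l' then pend (t a) l' else v.

Definition is_path (p : rawpath) : bool := chain p.1 p.2.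
Definition psrc (p : rawpath) : V := p.1.
Definition ptgt (p : rawpath) : V := pend p.1 p.2.

(* concatenation x y: first x, then y (defined when ptgt x = psrc y) *)
Definition pconcat (p q : rawpath) : rawpath := (p.1, p.2 ++ q.2).
Definition composable (p q : rawpath) : bool :=
  [&& is_path p, is_path q & ptgt p == psrc q].

Definition vec := rawpath -> K.
Definition tvec := (rawpath * rawpath -> K)%type.

Definition vzero : vec := fun _ => 0.

Definition in_kQ (x : vec) : Prop :=
  (forall p, x p != 0 -> is_path p) /\
  exists r : seq rawpath, forall p, x p != 0 -> p \in r.

(* Delta(p) = sum_{x y = p} x (x) y, extended linearly:
   the coefficient of x (x) y in Delta(z) is the coefficient of x y in z. *)
Definition comul (x : vec) : tvec :=
  fun pq => if composable pq.1 pq.2 then x (pconcat pq.1 pq.2) else 0.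

Definition subspace (S : vec -> Prop) : Prop :=
  [/\ forall x, S x -> in_kQ x,
      S vzero,
      (forall x y, S x -> S y -> S (fun p => x p + y p)) &
      (forall (a : K) x, S x -> S (fun p => a * x p))].

Definition vsubset (S T : vec -> Prop) : Prop := forall x, S x -> T x.

Definition tensor (S T : vec -> Prop) (g : tvec) : Prop :=
  exists (n : nat) (xs ys : 'I_n -> vec),
    (forall i, S (xs i) /\ T (ys i)) /\
    forall pq, g pq = \sum_(i < n) xs i pq.1 * ys i pq.2.

Definition subcoalgebra (C : vec -> Prop) : Prop :=
  subspace C /\ forall x, C x -> tensor C C (comul x).

Definition right_coideal (C I : vec -> Prop) : Prop :=
  [/\ subspace I, vsubset I C & forall x, I x -> tensor I C (comul x)].

Definition generated_by (C : vec -> Prop) (F : seq vec) (I : vec -> Prop) : Prop :=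
  [/\ right_coideal C I,
      (forall i : 'I_(size F), I (nth vzero F i)) &
      (forall J, right_coideal C J -> (forall i : 'I_(size F), J (nth vzero F i)) -> vsubset I J)].

Definition fin_generated (C I : vec -> Prop) : Prop :=
  exists F : seq vec, generated_by C F I.

(* y \in <x>^C, i.e. y lies in the smallest right coideal of C containing x
   (= intersection of all right coideals of C containing x) *)
Definition in_cogen (C : vec -> Prop) (x y : vec) : Prop :=
  forall J, right_coideal C J -> J x -> J y.

Definition multipath (x : vec) : Prop :=
  [/\ in_kQ x, (exists p, x p != 0) &
      exists v w : V, forall p, x p != 0 -> psrc p = v /\ ptgt p = w].

Definition multipath_in (C : vec -> Prop) (x : vec) : Prop := C x /\ multipath x.

Definition lin_indep (F : seq vec) : Prop :=
  forall c : 'I_(size F) -> K,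
    (forall p, \sum_(i < size F) c i * nth vzero F i p = 0) -> forall i, c i = 0.

Definition independent (C : vec -> Prop) (F : seq vec) : Prop :=
  lin_indep F /\
  forall i j : 'I_(size F), in_cogen C (nth vzero F i) (nth vzero F j) -> i = j.

End PathCoalgebra.

(* Main.v *)
Require Import Defs.
From mathcomp Require Import all_boot all_algebra.
From mathcomp Require Import ring zify.
From Stdlib Require Import Classical FunctionalExtensionality.
Set Implicit Arguments. Unset Strict Implicit. Unset Printing Implicit Defensive.
Import GRing.Theory.

Section Proof.
Local Open Scope ring_scope.
Variables (K : fieldType) (V A : eqType) (s t : A -> V).
Local Notation vec := (vec K V A).
Local Notation tvec := (tvec K V A).
Local Notation vzero := (@vzero K V A).

Lemma span_seq (J : vec -> Prop) (T : Type) (r : seq T) (P : pred T)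
   (c : T -> K) (f : T -> vec) :
  subspace s t J -> (forall i, P i -> J (f i)) ->
  J (fun p => \sum_(i <- r | P i) c i * f i p).
Proof.
move=> [_ J0 JD JZ] Hf; elim: r => [|i r IH].
  have -> : (fun p => \sum_(i <- [::] | P i) c i * f i p) = vzero.
    by apply: functional_extensionality => p; rewrite big_nil.
  exact: J0.
case Pi: (P i).
  have -> : (fun p => \sum_(j <- i :: r | P j) c j * f j p)
     = (fun p => (fun p => c i * f i p) p + (fun p => \sum_(j <- r | P j) c j * f j p) p).
    by apply: functional_extensionality => p; rewrite big_cons Pi.
  by apply: JD => //; apply: JZ; apply: Hf.
have -> : (fun p => \sum_(j <- i :: r | P j) c j * f j p)
     = (fun p => \sum_(j <- r | P j) c j * f j p).
  by apply: functional_extensionality => p; rewrite big_cons Pi.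
exact: IH.
Qed.

Lemma contr (C J : vec -> Prop) x q :
  right_coideal s t C J -> J x -> J (fun p => comul s t x (p, q)).
Proof.
move=> [sJ _ tJ] Jx; have [n [xs [ys [H1 H2]]]] := tJ x Jx.
have -> : (fun p => comul s t x (p, q))
   = (fun p => \sum_(i <- index_enum 'I_n | predT i) ys i q * xs i p).
  apply: functional_extensionality => p; rewrite H2 /=.
  by apply: eq_bigr => i _; rewrite mulrC.
by apply: span_seq => // i _; case: (H1 i).
Qed.

Lemma tensor_ext (I C : vec -> Prop) (g : tvec) (y z : vec) :
  tensor I C g -> I y -> C z -> tensor I C (fun pq => g pq + y pq.1 * z pq.2).
Proof.
move=> [n [xs [ys [H1 H2]]]] Iy Cz.
exists n.+1, (fun i => if unlift ord_max i is Some j then xs j else y),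
             (fun i => if unlift ord_max i is Some j then ys j else z).
split.
  by move=> i; case: (unlift ord_max i) => [j|] //; apply: H1.
move=> pq; rewrite big_ord_recr /= unlift_none H2; congr (_ + _).
apply: eq_bigr => i _.
have -> : widen_ord (leqnSn n) i = lift ord_max i by apply: val_inj; rewrite /= /bump leqNgt ltn_ord.
by rewrite liftK.
Qed.

Lemma tensor_of (I C : vec -> Prop) n : subspace s t I -> subspace s t C ->
  forall (a b : 'I_n -> vec) (g : tvec),
  (forall k, C (b k)) -> (forall pq, g pq = \sum_(k < n) a k pq.1 * b k pq.2) ->
  (forall q, I (fun p => g (p, q))) -> tensor I C g.
Proof.
move=> sI sC; elim: n => [|n IH] a b g Cb Hg Ig.
  exists 0, (fun _ => vzero), (fun _ => vzero); split; first by case.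
  by move=> pq; rewrite Hg !big_ord0.
pose bm := b ord_max.
pose a' := fun k : 'I_n => a (widen_ord (leqnSn n) k).
case: (classic (exists q0, bm q0 != 0)) => [[q0 Hq0]|Hno].
  pose be := bm q0.
  pose y := fun p => g (p, q0).
  pose b' := fun (k : 'I_n) r => b (widen_ord (leqnSn n) k) r
        + (- (b (widen_ord (leqnSn n) k) q0 / be)) * bm r.
  pose g' := fun pq : rawpath V A * rawpath V A => g pq + (- (bm pq.2 / be)) * y pq.1.
  have Hg' : forall pq, g' pq = \sum_(k < n) a' k pq.1 * b' k pq.2.
    move=> pq; rewrite /g' /y !Hg !big_ord_recr /= -/bm.
    rewrite [RHS](eq_bigr (fun k => a' k pq.1 * b (widen_ord (leqnSn n) k) pq.2
        + (- (b (widen_ord (leqnSn n) k) q0 / be) * bm pq.2) * a' k pq.1)); last first.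
      by move=> k _; rewrite /b'; ring.
    rewrite big_split /= mulrDr mulr_sumr.
    rewrite [X in _ + (X + _) = _](eq_bigr (fun k => (- (b (widen_ord (leqnSn n) k) q0 / be) * bm pq.2) * a' k pq.1)); last first.
      by move=> k _; rewrite /a'; ring.
    set S1 := \sum_(i < n) _. set S2 := \sum_(i < n) _.
    rewrite /be; field; exact: Hq0.
  have Ig' : tensor I C g'.
    apply: (IH a' b') => //.
      move=> k; case: sC => _ _ CD CZ.
      exact: (CD _ _ (Cb _) (CZ _ _ (Cb ord_max))).
    move=> q; case: sI => _ _ ID IZ.
    exact: (ID _ _ (Ig q) (IZ (- (bm q / be)) _ (Ig q0))).
  have E : (fun pq => g' pq + (fun p => be^-1 * y p) pq.1 * bm pq.2) = g.
    apply: functional_extensionality => pq; rewrite /g' /y /=.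
    rewrite /be; field; exact: Hq0.
  apply: (eq_ind _ (tensor I C) _ _ E).
  apply: (@tensor_ext I C g' (fun p => be^-1 * y p) bm Ig'); last exact: Cb.
  by case: sI => _ _ _ IZ; apply: (IZ _ y); apply: Ig.
apply: (IH a' (fun k => b (widen_ord (leqnSn n) k))) => // pq.
rewrite Hg big_ord_recr /=.
have -> : b ord_max pq.2 = 0.
  by apply/eqP; apply/negPn/negP => H; apply: Hno; exists pq.2.
by rewrite mulr0 addr0.
Qed.


Definition gen (C : vec -> Prop) (F : seq vec) (y : vec) : Prop :=
  forall J, right_coideal s t C J ->
    (forall i : 'I_(size F), J (nth vzero F i)) -> J y.

Definition allP (P : vec -> Prop) (F : seq vec) :=
  forall j, (j < size F)%N -> P (nth vzero F j).

Lemma allP_ord P F : allP P F <-> forall i : 'I_(size F), P (nth vzero F i).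
Proof. by split=> H; [move=> i; apply: H | move=> j Hj; apply: (H (Ordinal Hj))]. Qed.

Lemma C_rc (C : vec -> Prop) : subcoalgebra s t C -> right_coideal s t C C.
Proof. by move=> [sC HC]; split. Qed.

Lemma gen_sub (C : vec -> Prop) F : subcoalgebra s t C ->
  (forall i : 'I_(size F), C (nth vzero F i)) -> subspace s t (gen C F).
Proof.
move=> HC HF; have CC := C_rc HC; have [sC _] := HC.
split.
- move=> x Hx; case: sC => inC _ _ _; exact: inC (Hx C CC HF).
- by move=> J [sJ _ _] _; case: sJ.
- by move=> x y Hx Hy J HJ HJF; case: (HJ) => [sJ _ _]; case: sJ => _ _ JD _; apply: JD; [apply: Hx|apply: Hy].
- by move=> a x Hx J HJ HJF; case: (HJ) => [sJ _ _]; case: sJ => _ _ _ JZ; apply: JZ; apply: Hx.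
Qed.

Lemma gen_rc (C : vec -> Prop) F : subcoalgebra s t C ->
  (forall i : 'I_(size F), C (nth vzero F i)) -> right_coideal s t C (gen C F).
Proof.
move=> HC HF; have CC := C_rc HC; have sG := gen_sub HC HF.
have [sC Hcc] := HC.
split => //; first by move=> x Hx; apply: Hx.
move=> x Hx; have Cx := Hx C CC HF.
have [n [a [b [Hab Hg]]]] := Hcc x Cx.
apply: (@tensor_of (gen C F) C n sG sC a b) => //.
- by move=> k; case: (Hab k).
- by move=> q J HJ HJF; apply: (contr q HJ); apply: Hx.
Qed.

Lemma gen_gens (C : vec -> Prop) F (i : 'I_(size F)) : gen C F (nth vzero F i).
Proof. by move=> J _ H; apply: H. Qed.

Definition restr (vw : V * V) (x : vec) : vec :=
  fun p => if is_path s t p && ((psrc p, ptgt t p) == vw) then x p else 0.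

Lemma restr_C (C : vec -> Prop) vw x : subcoalgebra s t C -> C x -> C (restr vw x).
Proof.
move=> HC Cx; have CC := C_rc HC; have [sC Hcc] := HC.
have Cy : C (fun p' => comul s t x (p', (vw.2, [::]))) by apply: contr CC Cx.
have [n [a [b [Hab Hg]]]] := Hcc _ Cy.
have -> : restr vw x = fun p => \sum_(k <- index_enum 'I_n | predT k)
      a k (vw.1, [::]) * b k p.
  apply: functional_extensionality => p.
  rewrite -(Hg ((vw.1, [::]), p)).
  clear Cy Hg Hab; case: vw => v w; case: p => p1 p2.
  rewrite /restr /comul /composable /is_path /ptgt /psrc /pconcat /= cats0.
  case: (eqVneq v p1) => [<-|ne].
    by rewrite andbT xpair_eqE eqxx /=; case: (chain s t v p2).
  by rewrite xpair_eqE eq_sym (negbTE ne) /= !andbF.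
by apply: span_seq => // k _; case: (Hab k).
Qed.

Lemma allP_map (T : eqType) (f : T -> vec) (L : seq T) (P : vec -> Prop) :
  (forall a, a \in L -> P (f a)) -> allP P (map f L).
Proof.
elim: L => [|a L IH] H [|j] //= Hj.
  by apply: H; rewrite mem_head.
by apply: IH => // b Hb; apply: H; rewrite in_cons Hb orbT.
Qed.

Lemma allP_cat P F1 F2 : allP P (F1 ++ F2) <-> allP P F1 /\ allP P F2.
Proof.
split.
  move=> H; split => j Hj.
    by have := H j; rewrite size_cat nth_cat Hj; apply; apply: leq_trans Hj (leq_addr _ _).
  have := H (size F1 + j); rewrite size_cat nth_cat ltn_add2l Hj.
  by rewrite ltnNge leq_addr /= addKn; apply.
move=> [H1 H2] j; rewrite size_cat nth_cat => Hj.
case: ifP => Hj1; first by apply: H1.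
by apply: H2; rewrite ltn_subLR // leqNgt Hj1.
Qed.

Lemma span_all (J : vec -> Prop) M : subspace s t J -> allP J M ->
  J (fun p => \sum_(m <- M) m p).
Proof.
move=> sJ; have [_ J0 JD _] := sJ.
elim: M => [|m M IH] H.
  have -> : (fun p => \sum_(m <- [::]) m p) = vzero.
    by apply: functional_extensionality => p; rewrite big_nil.
  exact: J0.
have -> : (fun p => \sum_(m0 <- m :: M) m0 p) =
    (fun p => m p + (fun p => \sum_(m0 <- M) m0 p) p).
  by apply: functional_extensionality => p; rewrite big_cons.
apply: JD; first exact: (H 0%N).
by apply: IH => j Hj; apply: (H j.+1).
Qed.

Lemma decomp1 (C : vec -> Prop) x : subcoalgebra s t C -> C x ->
  exists M, allP (multipath_in s t C) M /\ x = fun p => \sum_(m <- M) m p.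
Proof.
move=> HC Cx; have [sC _] := HC; have [inC _ _ _] := sC.
have [Hpath [r Hr]] := inC x Cx.
pose r' := [seq p <- r | x p != 0].
pose L := undup [seq (psrc p, ptgt t p) | p <- r'].
exists [seq restr vw x | vw <- L]; split.
  apply: allP_map => vw; rewrite mem_undup => /mapP [p0 Hp0 ->].
  move: Hp0; rewrite mem_filter => /andP [Hx0 _].
  have Cr := restr_C (psrc p0, ptgt t p0) HC Cx.
  split => //; split; first exact: inC.
    by exists p0; rewrite /restr Hpath // eqxx.
  exists (psrc p0), (ptgt t p0) => p; rewrite /restr.
  by case: ifP => [/andP [_ /eqP [-> ->]]|]; [|rewrite eqxx].
apply: functional_extensionality => p; rewrite big_map.
case: (eqVneq (x p) 0) => Hxp.
  by rewrite Hxp big1 // => vw _; rewrite /restr Hxp; case: ifP.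
have Ha : (psrc p, ptgt t p) \in L.
  by rewrite mem_undup; apply: map_f; rewrite mem_filter Hxp Hr.
rewrite (bigD1_seq _ Ha (undup_uniq _)) /= big1 ?addr0.
  by rewrite /restr Hpath // eqxx.
by move=> vw Hne; rewrite /restr eq_sym (negbTE Hne) andbF.
Qed.

Lemma decomp_all (C : vec -> Prop) F0 : subcoalgebra s t C -> allP C F0 ->
  exists G, allP (multipath_in s t C) G /\
    forall j, (j < size F0)%N -> forall J, right_coideal s t C J -> allP J G ->
      J (nth vzero F0 j).
Proof.
move=> HC; elim: F0 => [|x F0 IH] HF0.
  by exists [::]; split => // j.
have [|G [HG HGF]] := IH; first by move=> j Hj; apply: (HF0 j.+1).
have [M [HM Ex]] := decomp1 HC (HF0 0%N isT : C x).
exists (M ++ G); split; first by apply/allP_cat.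
move=> [|j] Hj J HJ /allP_cat [JM JG] /=.
  by rewrite Ex; case: HJ => sJ _ _; apply: span_all.
by apply: HGF.
Qed.

Definition del (k : nat) (G : seq vec) := take k G ++ drop k.+1 G.

Lemma del_size k G : (k < size G)%N -> size (del k G) = (size G).-1.
Proof. move=> Hk; rewrite /del size_cat size_take size_drop Hk; lia. Qed.

Lemma del_nth k G j : (k < size G)%N -> (j < size (del k G))%N ->
  nth vzero (del k G) j = nth vzero G (if (j < k)%N then j else j.+1).
Proof.
move=> Hk; rewrite del_size // => Hj.
rewrite /del nth_cat size_take Hk.
case: ifP => Hjk; first by rewrite nth_take.
rewrite nth_drop; congr nth; lia.
Qed.

Lemma del_nth2 k G m : (k < size G)%N -> (m < size G)%N -> m != k ->
  exists j, (j < size (del k G))%N /\ nth vzero G m = nth vzero (del k G) j.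
Proof.
move=> Hk Hm Hmk; exists (if (m < k)%N then m else m.-1).
have Hs := del_size Hk.
have Hj : ((if (m < k)%N then m else m.-1) < size (del k G))%N.
  by rewrite Hs; case: ifP => H; move: Hmk => /eqP; lia.
split => //; rewrite del_nth //; congr nth.
case: (ltnP m k) => H; first by rewrite H.
have -> : (m.-1 < k)%N = false by apply/negbTE; move: Hmk => /eqP; lia.
move: Hmk => /eqP; lia.
Qed.


Definition removable (C : vec -> Prop) (G : seq vec) k :=
  forall J, right_coideal s t C J ->
    (forall m, (m < size G)%N -> m != k -> J (nth vzero G m)) -> J (nth vzero G k).

Lemma not_indep_removable (C : vec -> Prop) G : ~ independent s t C G ->
  exists k, (k < size G)%N /\ removable C G k.
Proof.
move=> /not_and_or [Hli|Hco].
  have [c Hc] := not_all_ex_not _ _ Hli.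
  have [Hsum Hc'] := imply_to_and _ _ Hc.
  have [i Hci] := not_all_ex_not _ _ Hc'.
  exists (val i); split; first exact: ltn_ord.
  move=> J [sJ _ _] Hoth.
  have Hsp : J (fun p => (- (c i)^-1) * \sum_(j <- index_enum 'I_(size G) | j != i)
                     c j * nth vzero G j p).
    case: (sJ) => _ _ _ JZ; apply: (JZ _ (fun p => \sum_(j <- index_enum 'I_(size G) | j != i)
                     c j * nth vzero G j p)).
    apply: span_seq => // j Hj; apply: Hoth; first exact: ltn_ord.
    exact: Hj.
  have -> : nth vzero G i = (fun p => (- (c i)^-1) * \sum_(j <- index_enum 'I_(size G) | j != i)
                     c j * nth vzero G j p) => //.
  apply: functional_extensionality => p.
  move: (Hsum p); rewrite (bigD1 i) //= addrC => /eqP; rewrite addr_eq0 => /eqP ->.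
  by field; apply/eqP.
have [i Hi] := not_all_ex_not _ _ Hco.
have [j Hj] := not_all_ex_not _ _ Hi.
have [Hcog Hij] := imply_to_and _ _ Hj.
exists (val j); split; first exact: ltn_ord.
move=> J HJ Hoth; apply: (Hcog J HJ); apply: Hoth; first exact: ltn_ord.
apply/negP => /eqP Heq; apply: Hij; symmetry; exact: val_inj.
Qed.

Lemma reduce (C : vec -> Prop) : subcoalgebra s t C -> forall n G, (size G <= n)%N ->
  allP (multipath_in s t C) G ->
  exists F, allP (multipath_in s t C) F /\ independent s t C F /\ allP (gen C F) G.
Proof.
move=> HC; elim=> [|n IH] G Hs HG.
  case: (classic (independent s t C G)) => Hind.
    by exists G; split => //; split => // j Hj; exact: (@gen_gens C G (Ordinal Hj)).
  have [k [Hk _]] := not_indep_removable Hind; move: Hs; rewrite leqn0 => /eqP Hs.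
  by rewrite Hs in Hk.
case: (classic (independent s t C G)) => Hind.
  by exists G; split => //; split => // j Hj; exact: (@gen_gens C G (Ordinal Hj)).
have [k [Hk Hrem]] := not_indep_removable Hind.
have Hs' : (size (del k G) <= n)%N by rewrite del_size //; lia.
have HG' : allP (multipath_in s t C) (del k G).
  move=> j Hj; rewrite del_nth //; apply: HG.
  by move: Hj; rewrite del_size //; case: ifP => _; lia.
have [F [HF [HiF HgF]]] := IH _ Hs' HG'.
exists F; split => //; split => //.
have CF : forall i : 'I_(size F), C (nth vzero F i).
  by move=> i; case: (HF i (ltn_ord i)).
have Hrc := gen_rc HC CF.
have Hoth : forall m, (m < size G)%N -> m != k -> gen C F (nth vzero G m).
  move=> m Hm Hmk; have [j [Hj ->]] := del_nth2 Hk Hm Hmk; exact: HgF.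
move=> m Hm; case: (eqVneq m k) => [->|Hmk]; last exact: Hoth.
exact: Hrem.
Qed.

End Proof.

Theorem corollary4p21 (K : fieldType) (V A : eqType) (s t : A -> V)
    (C I : vec K V A -> Prop) :
  subcoalgebra s t C ->
  fin_generated s t C I ->
  exists F : seq (vec K V A),
    (forall i : 'I_(size F), multipath_in s t C (nth (@vzero K V A) F i)) /\
    independent s t C F /\
    exists I' : vec K V A -> Prop, generated_by s t C F I' /\ vsubset I I'.
Proof.
move=> HC [F0 [Irc IF0 Imin]].
have CF0 : allP C F0.
  by move=> j Hj; case: Irc => _ sub _; apply: sub; apply: (IF0 (Ordinal Hj)).
have [G [HG HGF0]] := decomp_all HC CF0.
have [F [HF [Hind HFG]]] := reduce HC (leqnn _) HG.
have CF : forall i : 'I_(size F), C (nth (@vzero K V A) F i).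
  by move=> i; case: (HF i (ltn_ord i)).
exists F; split; first by move=> i; apply: HF.
split => //; exists (gen s t C F); split.
  split; first exact: gen_rc.
    by move=> i; apply: gen_gens.
  by move=> J HJ HJF y Hy; apply: Hy.
apply: Imin; first exact: gen_rc.
by move=> i; apply: (HGF0 i (ltn_ord i)) => //; apply: gen_rc.
Qed.
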